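(* Let $M$ be a holomorphic hypersurface of a Kähler manifold with Norden metric $(M',g,J)$ of dimension $2n+2$, and let $p\in M$. If there exists a nonzero vector $\eta$ normal to $M$ at $p$ such that $$A_\eta=\frac{\operatorname{trace}A_\eta}{2n}\,I-\frac{\operatorname{trace}(A_\eta\circ J)}{2n}\,J,$$ then $\sigma(x,y)=g(x,y)H-\tilde g(x,y)JH$ for all $x,y\in T_pM$.
   Context: A Kähler manifold with Norden metric: manifold $M'$ with almost complex structure $J$, pseudo-Riemannian metric $g$ with $g(JX,JY)=-g(X,Y)$ and $\nabla'J=0$; $\tilde g(X,Y)=g(JX,Y)$. A holomorphic hypersurface is a $2n$-dimensional submanifold $M$ with $J(T_pM)=T_pM$ and $g|_{T_pM}$ nondegenerate, with induced Levi-Civita connection $\nabla$; its second fundamental form $\sigma$ is defined by $\nabla'_XY=\nabla_XY+\sigma(X,Y)$ and its mean curvature vector is $H=\frac1{2n}\operatorname{trace}_g\sigma$. For a vector $\eta$ normal to $M$ at $p$, $A_\eta$ is the endomorphism of $T_pM$ with $g(A_\eta x,y)=g(\sigma(x,y),\eta)$; $I$ is the identity. *)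

(* Defs.v *)
From HB Require Import structures.
From mathcomp Require Import all_boot all_order all_algebra.
From mathcomp Require Import all_classical all_reals all_analysis.
Set Implicit Arguments. Unset Strict Implicit. Unset Printing Implicit Defensive.
Import Order.TTheory GRing.Theory Num.Theory.
Import numFieldNormedType.Exports.
Local Open Scope classical_set_scope.
Local Open Scope ring_scope.

(* Vectors are row vectors; a (0,2)-tensor G acts as g(X,Y) = X G Y^T;
   a (1,1)-tensor J acts on vectors by X |-> X *m J. *)
Definition gf {R : realType} {m : nat} (G : 'M[R]_m) (X Y : 'rV[R]_m) : R :=
  (X *m G *m Y^T) 0 0.

(* Lowered Christoffel symbols of the Levi-Civita connection of g at x:
   (christoffel_low g x X Y) . Z^T = g(nabla_X Y, Z) for constant fields,
   given by the Koszul formula. *)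
Definition christoffel_low {R : realType} {m : nat}
  (g : 'rV[R]_m -> 'M[R]_m) (x X Y : 'rV[R]_m) : 'rV[R]_m :=
  2^-1 *: (Y *m derive g x X + X *m derive g x Y
           - \row_l gf (derive g x (delta_mx 0 l)) X Y).

(* Gamma_x(X,Y), so that nabla'_X Y = D_X Y + Gamma(X, Y). *)
Definition christoffel {R : realType} {m : nat}
  (g : 'rV[R]_m -> 'M[R]_m) (x X Y : 'rV[R]_m) : 'rV[R]_m :=
  christoffel_low g x X Y *m invmx (g x).

(* (U, g, J): an open coordinate domain in R^m with a pseudo-Riemannian metric
   g, an almost complex structure J, Norden condition g(JX,JY) = -g(X,Y),
   and the Kaehler condition nabla' J = 0. *)
Definition kahler_norden {R : realType} {m : nat} (U : set 'rV[R]_m)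
  (g J : 'rV[R]_m -> 'M[R]_m) : Prop :=
  open U /\
  forall x, U x ->
    (g x)^T = g x /\ g x \in unitmx /\
        J x *m J x = - 1%:M /\
        J x *m g x *m (J x)^T = - g x /\
        differentiable g x /\ differentiable J x /\
        forall X Y : 'rV[R]_m,
          Y *m derive J x X + christoffel g x X (Y *m J x)
          - christoffel g x X Y *m J x = 0.

Definition df {R : realType} {d m : nat} (f : 'rV[R]_d -> 'rV[R]_m)
  (u a : 'rV[R]_d) : 'rV[R]_m := derive f u a.

(* f : V -> U is a (local parametrization of a) holomorphic hypersurface:
   an immersion whose tangent spaces are J-invariant and on which g is
   nondegenerate; f is twice differentiable. *)
Definition holomorphic_hypersurface {R : realType} {d m : nat}
  (U : set 'rV[R]_m) (g J : 'rV[R]_m -> 'M[R]_m)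
  (V : set 'rV[R]_d) (f : 'rV[R]_d -> 'rV[R]_m) : Prop :=
  open V /\
  forall u, V u ->
    U (f u) /\ differentiable f u /\
        (forall b, differentiable (fun w => df f w b) u) /\
        (forall a, df f u a = 0 -> a = 0) /\
        (forall a, exists b, df f u a *m J (f u) = df f u b) /\
        (forall b, exists a, df f u a *m J (f u) = df f u b) /\
        (forall a, (forall b, gf (g (f u)) (df f u a) (df f u b) = 0) -> a = 0).

Definition eb {R : realType} {d : nat} (a : 'I_d) : 'rV[R]_d := delta_mx 0 a.

Definition ind_metric {R : realType} {d m : nat} (g : 'rV[R]_m -> 'M[R]_m)
  (f : 'rV[R]_d -> 'rV[R]_m) (u : 'rV[R]_d) : 'M[R]_d :=
  \matrix_(a, b) gf (g (f u)) (df f u (eb a)) (df f u (eb b)).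

Definition tan_proj {R : realType} {d m : nat} (g : 'rV[R]_m -> 'M[R]_m)
  (f : 'rV[R]_d -> 'rV[R]_m) (u : 'rV[R]_d) (s : 'rV[R]_m) : 'rV[R]_m :=
  \sum_(a < d) \sum_(b < d)
     (gf (g (f u)) s (df f u (eb a)) * invmx (ind_metric g f u) a b)
       *: df f u (eb b).

Definition nor_proj {R : realType} {d m : nat} (g : 'rV[R]_m -> 'M[R]_m)
  (f : 'rV[R]_d -> 'rV[R]_m) (u : 'rV[R]_d) (s : 'rV[R]_m) : 'rV[R]_m :=
  s - tan_proj g f u s.

Definition sff {R : realType} {d m : nat} (g : 'rV[R]_m -> 'M[R]_m)
  (f : 'rV[R]_d -> 'rV[R]_m) (u a b : 'rV[R]_d) : 'rV[R]_m :=
  nor_proj g f u (derive (fun w => df f w b) u a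
                  + christoffel g (f u) (df f u a) (df f u b)).

Definition mean_curv {R : realType} {d m : nat} (g : 'rV[R]_m -> 'M[R]_m)
  (f : 'rV[R]_d -> 'rV[R]_m) (u : 'rV[R]_d) : 'rV[R]_m :=
  (d%:R)^-1 *: \sum_(a < d) \sum_(b < d)
     invmx (ind_metric g f u) a b *: sff g f u (eb a) (eb b).

(* Am is the matrix (in the coordinates a |-> df a) of A_eta:
   g(A_eta x, y) = g(sigma(x,y), eta). *)
Definition is_shape_op {R : realType} {d m : nat} (g : 'rV[R]_m -> 'M[R]_m)
  (f : 'rV[R]_d -> 'rV[R]_m) (u : 'rV[R]_d) (eta : 'rV[R]_m) (Am : 'M[R]_d) :=
  forall a b, gf (g (f u)) (df f u (a *m Am)) (df f u b)
              = gf (g (f u)) (sff g f u a b) eta.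

Definition is_tangent_J {R : realType} {d m : nat} (J : 'rV[R]_m -> 'M[R]_m)
  (f : 'rV[R]_d -> 'rV[R]_m) (u : 'rV[R]_d) (Jt : 'M[R]_d) :=
  forall a, df f u a *m J (f u) = df f u (a *m Jt).

(* Main.v *)
Require Import Defs.
From HB Require Import structures.
From mathcomp Require Import all_boot all_order all_algebra.
From mathcomp Require Import all_classical all_reals all_analysis.
From mathcomp Require Import ring.
Import Order.TTheory GRing.Theory Num.Theory.
Import numFieldNormedType.Exports.
Local Open Scope classical_set_scope.
Local Open Scope ring_scope.


Section Cv.
Context {R : realType}.

Definition cv (f : R -> R) (l : R) := f h @[h --> (0:R)^'] --> l.
Definition cvM {m n} (A : R -> 'M[R]_(m,n)) (L : 'M[R]_(m,n)) :=
  forall i j, cv (fun h => A h i j) (L i j).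

Lemma cv_cst c : cv (fun _ => c) c.
Proof. exact: cvg_cst. Qed.

Lemma cv_add {f g a b} : cv f a -> cv g b -> cv (fun h => f h + g h) (a + b).
Proof. by move=> Hf Hg; apply: cvgD. Qed.

Lemma cv_opp {f a} : cv f a -> cv (fun h => - f h) (- a).
Proof. by move=> Hf; apply: cvgN. Qed.

Lemma cv_mul {f g a b} : cv f a -> cv g b -> cv (fun h => f h * g h) (a * b).
Proof. by move=> Hf Hg; apply: cvgM. Qed.

Lemma cv_ext {f g a} : cv f a -> (forall h, f h = g h) -> cv g a.
Proof. by move=> Hf e; have -> : g = f by apply/funext=> h; rewrite e. Qed.

Lemma cv_bsum {I : Type} {r : seq I} {P : pred I} {F : I -> R -> R} {l : I -> R} :
  (forall i, P i -> cv (F i) (l i)) ->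
  cv (fun h => \sum_(i <- r | P i) F i h) (\sum_(i <- r | P i) l i).
Proof.
move=> H; elim: r => [|x r IH].
  by rewrite big_nil; apply: (@cv_ext (fun _ => 0)); [exact: cv_cst | move=> h; rewrite big_nil].
rewrite big_cons; apply: (@cv_ext (fun h => (if P x then F x h else 0) + \sum_(i <- r | P i) F i h)); last first.
  by move=> h; rewrite big_cons; case: (P x); rewrite ?add0r.
case Px: (P x).
  exact: cv_add (H _ Px) IH.
by rewrite -[X in cv _ X]add0r; apply: cv_add IH; exact: cv_cst.
Qed.

Lemma cv_bprod {I : Type} {r : seq I} {P : pred I} {F : I -> R -> R} {l : I -> R} :
  (forall i, P i -> cv (F i) (l i)) ->
  cv (fun h => \prod_(i <- r | P i) F i h) (\prod_(i <- r | P i) l i).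
Proof.
move=> H; elim: r => [|x r IH].
  by rewrite big_nil; apply: (@cv_ext (fun _ => 1)); [exact: cv_cst | move=> h; rewrite big_nil].
rewrite big_cons; apply: (@cv_ext (fun h => (if P x then F x h else 1) * \prod_(i <- r | P i) F i h)); last first.
  by move=> h; rewrite big_cons; case: (P x); rewrite ?mul1r.
case Px: (P x).
  exact: cv_mul (H _ Px) IH.
by rewrite -[X in cv _ X]mul1r; apply: cv_mul IH; exact: cv_cst.
Qed.

Lemma cvM_ext m n (A B : R -> 'M[R]_(m,n)) L : (forall h, A h = B h) -> cvM A L -> cvM B L.
Proof. move=> e H i j; apply: (cv_ext (H i j)) => h; by rewrite e. Qed.

Lemma cvM_cst m n (C : 'M[R]_(m,n)) : cvM (fun _ => C) C.
Proof. by move=> i j; exact: cv_cst. Qed.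

Lemma cvM_add {m n} {A B : R -> 'M[R]_(m,n)} {L K} :
  cvM A L -> cvM B K -> cvM (fun h => A h + B h) (L + K).
Proof.
move=> HA HB i j; rewrite [X in cv _ X]mxE.
by apply: (cv_ext (cv_add (HA i j) (HB i j))) => h; rewrite mxE.
Qed.

Lemma cvM_opp {m n} {A : R -> 'M[R]_(m,n)} {L} : cvM A L -> cvM (fun h => - A h) (- L).
Proof.
move=> HA i j; rewrite [X in cv _ X]mxE.
by apply: (cv_ext (cv_opp (HA i j))) => h; rewrite mxE.
Qed.

Lemma cvM_sub {m n} {A B : R -> 'M[R]_(m,n)} {L K} :
  cvM A L -> cvM B K -> cvM (fun h => A h - B h) (L - K).
Proof. by move=> HA HB; apply: cvM_add HA (cvM_opp HB). Qed.

Lemma cvM_scale {m n} {k : R -> R} {c} {A : R -> 'M[R]_(m,n)} {L} :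
  cv k c -> cvM A L -> cvM (fun h => k h *: A h) (c *: L).
Proof.
move=> Hk HA i j; rewrite [X in cv _ X]mxE.
by apply: (cv_ext (cv_mul Hk (HA i j))) => h; rewrite mxE.
Qed.

Lemma cvM_mul {m n p} {A : R -> 'M[R]_(m,n)} {B : R -> 'M[R]_(n,p)} {L K} :
  cvM A L -> cvM B K -> cvM (fun h => A h *m B h) (L *m K).
Proof.
move=> HA HB i j; rewrite [X in cv _ X]mxE.
apply: (cv_ext (cv_bsum (fun k _ => cv_mul (HA i k) (HB k j)))) => h.
by rewrite mxE.
Qed.

Lemma cvM_tr {m n} {A : R -> 'M[R]_(m,n)} {L} : cvM A L -> cvM (fun h => (A h)^T) L^T.
Proof. by move=> HA i j; rewrite [X in cv _ X]mxE; apply: (cv_ext (HA j i)) => h; rewrite mxE. Qed.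

Lemma cv_det {n} {A : R -> 'M[R]_n} {L} : cvM A L -> cv (fun h => \det (A h)) (\det L).
Proof.
move=> HA; rewrite /determinant.
apply: cv_bsum => s _; apply: cv_mul; first exact: cv_cst.
by apply: cv_bprod => i _; exact: HA.
Qed.

Lemma cvM_adj {n} {A : R -> 'M[R]_n} {L} : cvM A L -> cvM (fun h => \adj (A h)) (\adj L).
Proof.
move=> HA i j; rewrite [X in cv _ X]mxE /cofactor.
have H1 : cvM (fun h => row' j (col' i (A h))) (row' j (col' i L)).
  by move=> k l; rewrite !mxE; apply: (cv_ext (HA _ _)) => h; rewrite !mxE.
by apply: (cv_ext (cv_mul (cv_cst ((-1) ^+ (j + i))) (cv_det H1))) => h; rewrite mxE.
Qed.

Lemma cv_unique {f a b} : cv f a -> cv f b -> a = b.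
Proof. move=> Ha Hb; exact: (cvg_unique _ Ha Hb). Qed.

Lemma cv_near {f g a} : (\forall h \near (0:R)^', f h = g h) -> cv f a -> cv g a.
Proof.
move=> e Hf; apply: cvg_trans Hf; apply: near_eq_cvg.
by apply: filterS e => h ->.
Qed.

End Cv.

Section An.
Context {R : realType}.

Lemma path_cvg {d} (x q : 'rV[R]_d) : (fun h : R => h *: x + q) @ (0:R)^' --> q.
Proof.
have H : (fun h : R => h *: x + q) @ (0:R)^' --> 0 *: x + q.
  apply: cvgD; last exact: cvg_cst.
  apply: cvgZ; last exact: cvg_cst.
  exact: nbhs_dnbhs.
by rewrite scale0r add0r in H.
Qed.

Lemma cont_cvM {d m n} (g : 'rV[R]_d -> 'M[R]_(m,n)) x q :
  differentiable g q -> cvM (fun h => g (h *: x + q)) (g q).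
Proof.
move=> Hg i j; have c := differentiable_continuous Hg.
rewrite /cv.
have H1 : g (h *: x + q) @[h --> (0:R)^'] --> g q.
  by apply: cvg_comp; [exact: path_cvg | exact: c].
exact: (cvg_comp (fun h => g (h *: x + q)) (fun M : 'M[R]_(m,n) => M i j) H1 (@coord_continuous _ m n i j (g q))).
Qed.

Lemma quot_cvM {d m n} (M : 'rV[R]_d -> 'M[R]_(m,n)) t v :
  derivable M t v -> cvM (fun h => h^-1 *: (M (h *: v + t) - M t)) ('D_v M t).
Proof.
move=> Hd i j; rewrite (derive_mx Hd) [X in cv _ X]mxE.
have := (derivable_mxP M t v).1 Hd i j; rewrite /derivable => H.
apply: (cv_ext H) => h /=; rewrite !mxE.
by [].

Qed.

Lemma key_limit {d m} (psi : R -> 'rV[R]_m) (Dh : R -> 'M[R]_(d,m)) (G : 'M[R]_m)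
  (L : 'rV[R]_m) (D : 'M[R]_(d,m)) :
  cvM (fun h => h^-1 *: psi h) L -> cvM Dh D ->
  (\forall h \near (0:R)^', \det (Dh h *m G *m (Dh h)^T) *: psi h =
      psi h *m G *m (Dh h)^T *m \adj (Dh h *m G *m (Dh h)^T) *m Dh h) ->
  \det (D *m G *m D^T) *: L = L *m G *m D^T *m \adj (D *m G *m D^T) *m D.
Proof.
move=> HL HD Hn.
have HM : cvM (fun h => Dh h *m G *m (Dh h)^T) (D *m G *m D^T).
  exact: (cvM_mul (cvM_mul HD (cvM_cst _ _ G)) (cvM_tr HD)).
have HLHS := cvM_scale (cv_det HM) HL.
have HRHS := cvM_mul (cvM_mul (cvM_mul (cvM_mul HL (cvM_cst _ _ G)) (cvM_tr HD)) (cvM_adj HM)) HD.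
apply/matrixP => i j; apply: (cv_unique (HLHS i j)); apply: (cv_near _ (HRHS i j)).
apply: filterS Hn => h Hh.
by rewrite scalerA mulrC -scalerA Hh !scalemxAl.
Qed.
End An.


Section Geo.
Context {R : realType}.

Lemma mx00_delta k (X : 'M[R]_(1,k)) (a : 'I_k) : (X *m (eb a)^T) 0 0 = X 0 a.
Proof. by rewrite /eb trmx_delta -colE mxE. Qed.

Lemma rv0 k (v : 'rV[R]_k) : (forall x : 'rV[R]_k, (v *m x^T) 0 0 = 0) -> v = 0.
Proof. by move=> H; apply/rowP => a; rewrite -(mx00_delta _ v a) H mxE. Qed.

Definition Dmx {d m} (f : 'rV[R]_d -> 'rV[R]_m) w : 'M[R]_(d,m) :=
  \matrix_(c < d) df f w (eb c).

Lemma dfD {d m} (f : 'rV[R]_d -> 'rV[R]_m) w x :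
  differentiable f w -> df f w x = x *m Dmx f w.
Proof.
move=> Hf; rewrite mulmx_sum_row {1}(row_sum_delta x) /df (deriveE _ Hf) linear_sum.
apply: eq_bigr => c _; rewrite linearZ /= rowK /df (deriveE _ Hf) //.
Qed.

Lemma gfE {m} (G : 'M[R]_m) X Y : gf G X Y = (X *m G *m Y^T) 0 0.
Proof. by []. Qed.

Lemma gf_sym {m} (G : 'M[R]_m) X Y : G^T = G -> gf G X Y = gf G Y X.
Proof.
move=> Gs; rewrite !gfE.
have -> : (X *m G *m Y^T) 0 0 = ((X *m G *m Y^T)^T) 0 0 by rewrite [RHS]mxE.
by rewrite !trmx_mul trmxK Gs mulmxA.
Qed.

Lemma gfDl {m} (G : 'M[R]_m) X1 X2 Y : gf G (X1 + X2) Y = gf G X1 Y + gf G X2 Y.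
Proof. by rewrite !gfE !mulmxDl mxE. Qed.

Lemma gfNl {m} (G : 'M[R]_m) X Y : gf G (- X) Y = - gf G X Y.
Proof. by rewrite !gfE !mulNmx mxE. Qed.

Lemma gfBl {m} (G : 'M[R]_m) X1 X2 Y : gf G (X1 - X2) Y = gf G X1 Y - gf G X2 Y.
Proof. by rewrite gfDl gfNl. Qed.

Lemma gfZl {m} (G : 'M[R]_m) k X Y : gf G (k *: X) Y = k * gf G X Y.
Proof. by rewrite !gfE -!scalemxAl mxE. Qed.

Lemma gf_suml {m} (G : 'M[R]_m) (I : Type) (r : seq I) (P : pred I) (F : I -> 'rV[R]_m) Y :
  gf G (\sum_(i <- r | P i) F i) Y = \sum_(i <- r | P i) gf G (F i) Y.
Proof.
elim/big_rec2: _ => [|i y1 y2 _ <-]; first by rewrite gfE !mul0mx mxE.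
by rewrite gfDl.
Qed.


Lemma alg1 {m} (k : R) (U U0 V V0 : 'rV[R]_m) (J J0 : 'M[R]_m) :
  U0 *m J0 = V0 ->
  (k *: (U - U0)) *m J + U0 *m (k *: (J - J0)) - k *: (V - V0) = k *: (U *m J - V).
Proof.
move=> e; rewrite -scalemxAl -scalemxAr -scalerDr -scalerBr; congr (_ *: _).
rewrite mulmxBl mulmxBr e addrA subrK opprB addrA subrK //.
Qed.

Lemma e00D k (A B : 'M[R]_(1,k)) i : (A + B) 0 i = A 0 i + B 0 i.
Proof. by rewrite mxE. Qed.
Lemma e00N k (A : 'M[R]_(1,k)) i : (- A) 0 i = - A 0 i.
Proof. by rewrite mxE. Qed.
Lemma e00Z k (a : R) (A : 'M[R]_(1,k)) i : (a *: A) 0 i = a * A 0 i.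
Proof. by rewrite mxE. Qed.
Lemma e00B k (A B : 'M[R]_(1,k)) i : (A - B) 0 i = A 0 i - B 0 i.
Proof. by rewrite e00D e00N. Qed.


Lemma zm1 (W : zmodType) (A B C D : W) : A + (B + C) = (D + C) + (A + B - D).
Proof. by rewrite [RHS]addrC [RHS]addrA subrK addrA. Qed.


Lemma sq2 (W : lmodType R) (k1 k2 : R) (u v : W) :
  k1 *: (k1 *: u + k2 *: v) - k2 *: (k1 *: v - k2 *: u) = (k1 ^+ 2 + k2 ^+ 2) *: u.
Proof.
rewrite scalerDr scalerBr !scalerA scalerDl (mulrC k2 k1) opprB addrACA subrr addr0 !expr2 //.
Qed.

End Geo.


Theorem lemma2p5 (R : realType) (n : nat)
  (U : set 'rV[R]_((n.*2).+2)) (g J : 'rV[R]_((n.*2).+2) -> 'M[R]_((n.*2).+2))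
  (V : set 'rV[R]_(n.*2)) (f : 'rV[R]_(n.*2) -> 'rV[R]_((n.*2).+2))
  (q : 'rV[R]_(n.*2)) :
  kahler_norden U g J ->
  holomorphic_hypersurface U g J V f ->
  V q ->
  (exists eta : 'rV[R]_((n.*2).+2),
     [/\ eta != 0,
         forall a, gf (g (f q)) eta (df f q a) = 0 &
         exists (Am Jt : 'M[R]_(n.*2)),
           [/\ is_shape_op g f q eta Am, is_tangent_J J f q Jt &
               Am = (\tr Am / (n.*2)%:R) *: 1%:M
                    - (\tr (Jt *m Am) / (n.*2)%:R) *: Jt]]) ->
  forall a b : 'rV[R]_(n.*2),
    sff g f q a b =
      gf (g (f q)) (df f q a) (df f q b) *: mean_curv g f q
      - gf (g (f q)) (df f q a *m J (f q)) (df f q b) *: (mean_curv g f q *m J (f q)).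
Proof.
move=> [oU HU] [oV HV] Vq [eta [eta0 etaN [Am [Jt [HA HJt HAm]]]]] a b.
have [Uq [fdq [d2f [inj [tJ1 [tJ2 nondeg]]]]]] := HV q Vq.
have [Gsym [Gunit [JJ [JGJ [dg [dJ kah]]]]]] := HU (f q) Uq.
have dfq : forall x, df f q x = x *m Dmx f q := fun x => dfD f q x fdq.
set D := Dmx f q.
set M := D *m g (f q) *m D^T.
have gfdf : forall x y, gf (g (f q)) (df f q x) (df f q y) = (x *m M *m y^T) 0 0.
  by move=> x y; rewrite gfE !dfq trmx_mul !mulmxA.
have indM : ind_metric g f q = M.
  apply/matrixP => i j; rewrite mxE gfdf mx00_delta /eb -rowE mxE //.
have Msym : M^T = M by rewrite /M !trmx_mul trmxK Gsym mulmxA.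
have Munit : M \in unitmx.
  rewrite unitmxE unitfE; apply/negP => /det0P [v v0 vM].
  move/eqP: v0; apply; apply: nondeg => y.
  by rewrite gfdf vM mul0mx mxE.
have JG : J (f q) *m g (f q) = g (f q) *m (J (f q))^T.
  have := congr1 (mulmx^~ (J (f q))^T) JGJ.
  rewrite -mulmxA -trmx_mul JJ linearN /= mulmxN tr_scalar_mx mulmx1 mulNmx.
  by move/oppr_inj.
have gfJ : forall X Y, gf (g (f q)) (X *m J (f q)) Y = gf (g (f q)) X (Y *m J (f q)).
  move=> X Y; rewrite !gfE trmx_mul !mulmxA -(mulmxA X (J (f q)) (g (f q))) JG.
  by rewrite !mulmxA.
have gfJJ : forall X Y, gf (g (f q)) (X *m J (f q)) (Y *m J (f q)) = - gf (g (f q)) X Y.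
  by move=> X Y; rewrite gfJ -mulmxA JJ mulmxN mulmx1 !gfE linearN mulmxN mxE.
have JD : D *m J (f q) = Jt *m D.
  apply/row_matrixP => i; rewrite !row_mul /D /Dmx rowK HJt dfq rowE //.
have JtM : Jt *m M = M *m Jt^T.
  rewrite /M !mulmxA -JD -(mulmxA D (J (f q)) (g (f q))) JG mulmxA.
  rewrite -[D *m g (f q) *m (J (f q))^T *m D^T]mulmxA -trmx_mul JD trmx_mul.
  by rewrite !mulmxA.
have JtMJt : Jt *m M *m Jt^T = - M.
  have -> : Jt *m M *m Jt^T = (Jt *m D) *m g (f q) *m (Jt *m D)^T.
    by rewrite /M trmx_mul !mulmxA.
  rewrite -JD trmx_mul !mulmxA -(mulmxA D (J (f q)) (g (f q))).
  rewrite -(mulmxA D (J (f q) *m g (f q)) (J (f q))^T) JGJ mulmxN mulNmx //.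
have etaND : eta *m g (f q) *m D^T = 0.
  apply: rv0 => x; rewrite -(etaN x) gfE dfq trmx_mul !mulmxA //.
have isN_gf : forall (X : 'rV[R]_((n.*2).+2)) Y, X *m g (f q) *m D^T = 0 -> gf (g (f q)) X (df f q Y) = 0.
  by move=> X Y H; rewrite gfE dfq trmx_mul !mulmxA H mul0mx mxE.
have gf_isN : forall X : 'rV[R]_((n.*2).+2), X *m g (f q) *m D^T = 0 -> forall c, gf (g (f q)) (c *m D) X = 0.
  by move=> X HX c; rewrite gf_sym // -dfq isN_gf.
have isNJ : forall X : 'rV[R]_((n.*2).+2), X *m g (f q) *m D^T = 0 -> (X *m J (f q)) *m g (f q) *m D^T = 0.
  move=> X H; rewrite -(mulmxA X) JG mulmxA -mulmxA -trmx_mul JD trmx_mul mulmxA H.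
  by rewrite mul0mx.
have tanE : forall s, tan_proj g f q s = (s *m g (f q) *m D^T *m invmx M) *m D.
  move=> s; rewrite /tan_proj indM mulmx_sum_row exchange_big /=.
  apply: eq_bigr => c _; rewrite -scaler_suml; congr (_ *: _); last first.
    by rewrite /D /Dmx rowK.
  rewrite mxE; apply: eq_bigr => i _; congr (_ * _).
  by rewrite gfE dfq trmx_mul !mulmxA mx00_delta.
have norE : forall s, nor_proj g f q s *m g (f q) *m D^T = 0.
  move=> s; rewrite /nor_proj tanE !mulmxBl.
  have -> : s *m g (f q) *m D^T *m invmx M *m D *m g (f q) *m D^T
           = s *m g (f q) *m D^T *m (invmx M *m M) by rewrite /M !mulmxA.
  by rewrite mulVmx // mulmx1 subrr.
have norgf : forall s (X : 'rV[R]_((n.*2).+2)), X *m g (f q) *m D^T = 0 ->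
    gf (g (f q)) (nor_proj g f q s) X = gf (g (f q)) s X.
  by move=> s X HX; rewrite /nor_proj gfBl tanE gf_isN // subr0.
have AL : forall x y, exists c,
    'D_x (fun w => df f w y) q *m J (f q) + df f q y *m 'D_(df f q x) J (f q)
    - 'D_x (fun w => df f w (y *m Jt)) q = c *m D.
  move=> x y.
  have key : \det M *: ('D_x (fun w => df f w y) q *m J (f q) + df f q y *m 'D_(df f q x) J (f q)
    - 'D_x (fun w => df f w (y *m Jt)) q) = ('D_x (fun w => df f w y) q *m J (f q) + df f q y *m 'D_(df f q x) J (f q)
    - 'D_x (fun w => df f w (y *m Jt)) q) *m g (f q) *m D^T *m \adj M *m D.
    apply: (key_limit (fun h => df f (h *: x + q) y *m J (f (h *: x + q)) - df f (h *: x + q) (y *m Jt))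
                      (fun h => Dmx f (h *: x + q))).
    - have du := quot_cvM (fun w => df f w y) q x (diff_derivable (d2f y)).
      have dv := quot_cvM (fun w => df f w (y *m Jt)) q x (diff_derivable (d2f (y *m Jt))).
      have dJf : differentiable (J \o f) q := differentiable_comp fdq dJ.
      have cJ := cont_cvM (J \o f) x q dJf.
      have dj := quot_cvM (J \o f) q x (diff_derivable dJf).
      have lim := cvM_sub (cvM_add (cvM_mul du cJ) (cvM_mul (cvM_cst _ _ (df f q y)) dj)) dv.
      have eqJ : 'D_x (J \o f) q = 'D_(df f q x) J (f q).
        by rewrite (deriveE _ dJf) diff_comp // /= -(deriveE _ fdq) -(deriveE _ dJ).
      rewrite eqJ in lim.
      move: lim; apply: cvM_ext => h /=.
      by apply: alg1; exact: HJt.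
    - move=> i j; rewrite /D /Dmx [X in cv _ X]mxE.
      by apply: (cv_ext (cont_cvM (fun w => df f w (eb i)) x q (d2f (eb i)) 0 j)) => h; rewrite mxE.
    - have Vn : \forall h \near (0:R)^', V (h *: x + q).
        by apply: (path_cvg x q); apply: open_nbhs_nbhs; split.
      apply: filterS Vn => h Vw.
      have [_ [fdw [_ [_ [tJw _]]]]] := HV _ Vw.
      have [b' eb'] := tJw y.
      rewrite eb' (dfD f _ b' fdw) (dfD f _ (y *m Jt) fdw) -mulmxBl.
      rewrite (_ : (b' - y *m Jt) *m Dmx f (h *: x + q) *m g (f q) *m (Dmx f (h *: x + q))^T
          = (b' - y *m Jt) *m (Dmx f (h *: x + q) *m g (f q) *m (Dmx f (h *: x + q))^T)); last first.
        by rewrite !mulmxA.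
      by rewrite -(mulmxA (b' - y *m Jt)) mul_mx_adj mul_mx_scalar scalemxAl.
  have dM : \det M != 0 by move: Munit; rewrite unitmxE unitfE.
  have ex : forall (L' : 'rV[R]_((n.*2).+2)) (K : 'rV[R]_(n.*2)) (k : R),
      k != 0 -> k *: L' = K *m D -> exists c, L' = c *m D.
    by move=> L' K k k0 e; exists (k^-1 *: K); rewrite -scalemxAl -e scalerA mulVf // scale1r.
  exact: (ex _ _ _ dM key).
have KL : forall x y, gf (g (f q)) (sff g f q x y) (eta *m J (f q))
                    = gf (g (f q)) (sff g f q x (y *m Jt)) eta.
  move=> x y; rewrite /sff.
  have N1 := norgf ('D_x (fun w => df f w y) q + christoffel g (f q) (df f q x) (df f q y)) _ (isNJ _ etaND).
  have N2 := norgf ('D_x (fun w => df f w (y *m Jt)) q + christoffel g (f q) (df f q x) (df f q (y *m Jt))) _ etaND.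
  apply: (eq_trans N1); apply: (eq_trans _ (esym N2)).
  apply: (eq_trans (esym (gfJ _ _))).
  have kq := kah (df f q x) (df f q y).
  rewrite HJt in kq.
  have e := esym (subr0_eq kq).
  have [c Hc] := AL x y.
  have Ls : ('D_x (fun w => df f w y) q + christoffel g (f q) (df f q x) (df f q y)) *m J (f q)
     = ('D_x (fun w => df f w (y *m Jt)) q + christoffel g (f q) (df f q x) (df f q (y *m Jt))) + c *m D.
    by rewrite -Hc mulmxDl e; apply: zm1.
  by rewrite Ls gfDl gf_isN // addr0.
have L5 : forall Y : 'rV[R]_((n.*2).+2), Y *m g (f q) *m D^T = 0 ->
    gf (g (f q)) Y eta = 0 -> gf (g (f q)) Y (eta *m J (f q)) = 0 -> Y = 0.
  move=> Y YN Y1 Y2.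
  pose B : 'M[R]_((n.*2).+2) := col_mx (col_mx eta (eta *m J (f q))) D.
  have Bu : B \in unitmx.
    rewrite unitmxE unitfE; apply/negP => /det0P [v v0 vB].
    move/eqP: v0; apply.
    pose w : 'rV[R]_(1 + 1 + n.*2) := v.
    pose k1 := lsubmx (lsubmx w) 0 0.
    pose k2 := rsubmx (lsubmx w) 0 0.
    pose c := rsubmx w.
    have vE : w = row_mx (row_mx (k1%:M) (k2%:M)) c.
      by rewrite /k1 /k2 -!mx11_scalar !hsubmxK.
    have E : k1 *: eta + k2 *: (eta *m J (f q)) + c *m D = 0.
      change (w *m B = 0) in vB.
      by rewrite vE /B !mul_row_col !mul_scalar_mx in vB.
    have c0 : c = 0.
      have : (k1 *: eta + k2 *: (eta *m J (f q)) + c *m D) *m g (f q) *m D^T = 0.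
        by rewrite E !mul0mx.
      rewrite !mulmxDl -!scalemxAl etaND (isNJ _ etaND) !scaler0 !add0r => cM.
      have -> : c = c *m M *m invmx M by rewrite -mulmxA mulmxV // mulmx1.
      by rewrite /M !mulmxA cM !mul0mx.
    rewrite c0 mul0mx addr0 in E.
    have E2 : k1 *: (eta *m J (f q)) - k2 *: eta = 0.
      have := congr1 (mulmx^~ (J (f q))) E.
      by rewrite mul0mx mulmxDl -!scalemxAl -mulmxA JJ mulmxN mulmx1 scalerN.
    have S : (k1 ^+ 2 + k2 ^+ 2) *: eta = 0.
      by rewrite -(sq2 _ k1 k2 eta (eta *m J (f q))) E E2 !scaler0 subrr.
    have k0 : k1 ^+ 2 + k2 ^+ 2 = 0.
      by move/eqP: S; rewrite scaler_eq0 (negbTE eta0) orbF => /eqP.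
    have [k10 k20] : k1 = 0 /\ k2 = 0.
      move/eqP: k0; rewrite paddr_eq0 ?sqr_ge0 // !sqrf_eq0.
      by move=> /andP[/eqP -> /eqP ->].
    change (w = 0); rewrite vE k10 k20 c0 raddf0 !row_mx0 //.
  have YG : Y *m g (f q) = 0.
    have YB : Y *m g (f q) *m (col_mx (col_mx eta (eta *m J (f q))) D)^T = 0.
      rewrite !tr_col_mx !mul_mx_row YN.
      have -> : Y *m g (f q) *m eta^T = 0.
        by apply/matrixP => i j; rewrite (ord1 i) (ord1 j) [RHS]mxE; exact: Y1.
      have -> : Y *m g (f q) *m (eta *m J (f q))^T = 0.
        by apply/matrixP => i j; rewrite (ord1 i) (ord1 j) [RHS]mxE; exact: Y2.
      by rewrite !row_mx0.
    change (Y *m g (f q) *m B^T = 0) in YB.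
    have := congr1 (mulmx^~ (invmx B^T)) YB.
    by rewrite mul0mx -(mulmxA (Y *m g (f q))) mulmxV ?unitmx_tr // mulmx1.
  have := congr1 (mulmx^~ (invmx (g (f q)))) YG.
  by rewrite mul0mx -mulmxA mulmxV // mulmx1.
have sffN : forall x y, sff g f q x y *m g (f q) *m D^T = 0 by move=> x y; exact: norE.
set H := mean_curv g f q.
have HN : H *m g (f q) *m D^T = 0.
  rewrite /H /mean_curv -!scalemxAl !mulmx_suml big1 ?scaler0 // => i _.
  rewrite !mulmx_suml big1 // => j _.
  by rewrite -!scalemxAl sffN scaler0.
have gfH : forall X, gf (g (f q)) H X = ((n.*2)%:R)^-1 *
    \sum_i \sum_j invmx M i j * gf (g (f q)) (sff g f q (eb i) (eb j)) X.
  move=> X; rewrite /H /mean_curv gfZl gf_suml; congr (_ * _).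
  apply: eq_bigr => i _; rewrite gf_suml; apply: eq_bigr => j _.
  by rewrite gfZl indM.
have trsum : forall (A B : 'M[R]_(n.*2)), \sum_i \sum_j A i j * B i j = \tr (A *m B^T).
  move=> A B; rewrite /mxtrace; apply: eq_bigr => i _; rewrite mxE.
  by apply: eq_bigr => j _; rewrite mxE.
have sseta : forall x y, gf (g (f q)) (sff g f q x y) eta = (x *m Am *m M *m y^T) 0 0.
  by move=> x y; rewrite -HA gfdf.
have ent : forall (A : 'M[R]_(n.*2)) i j, (eb i *m A *m (eb j)^T) 0 0 = A i j.
  by move=> A i j; rewrite mx00_delta /eb -rowE mxE.
have alpha : gf (g (f q)) H eta = \tr Am / (n.*2)%:R.
  rewrite gfH mulrC; congr (_ * _).
  under eq_bigr do under eq_bigr do rewrite sseta -(mulmxA _ Am M) ent.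
  rewrite trsum trmx_mul Msym mulmxA mulVmx // mul1mx mxtrace_tr //.
have beta : gf (g (f q)) H (eta *m J (f q)) = \tr (Jt *m Am) / (n.*2)%:R.
  rewrite gfH mulrC; congr (_ * _).
  under eq_bigr do under eq_bigr do rewrite KL sseta trmx_mul (mulmxA (eb _ *m Am *m M)) -(mulmxA _ Am M) -(mulmxA _ (Am *m M) Jt^T) ent.
  rewrite trsum (trmx_mul (Am *m M)) trmxK (trmx_mul Am M) Msym (mulmxA Jt M) JtM -(mulmxA M) (mulmxA (invmx M) M) mulVmx //.
  by rewrite mul1mx -trmx_mul mxtrace_tr mxtrace_mulC.
have Amx : forall x y : 'rV[R]_(n.*2), (x *m Am *m M *m y^T) 0 0 =
   \tr Am / (n.*2)%:R * (x *m M *m y^T) 0 0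
   - \tr (Jt *m Am) / (n.*2)%:R * (x *m Jt *m M *m y^T) 0 0.
  move=> x y; rewrite [in x *m Am]HAm mulmxBr !mulmxBl -!scalemxAr mulmx1 -!scalemxAl.
  by rewrite e00B !e00Z.
have E1 : forall x y : 'rV[R]_(n.*2), (x *m M *m (y *m Jt)^T) 0 0 = (x *m Jt *m M *m y^T) 0 0.
  by move=> x y; rewrite trmx_mul (mulmxA (x *m M)) -(mulmxA x M) -JtM mulmxA.
have E2 : forall x y : 'rV[R]_(n.*2), (x *m Jt *m M *m (y *m Jt)^T) 0 0 = - (x *m M *m y^T) 0 0.
  move=> x y; rewrite trmx_mul (mulmxA (x *m Jt *m M)) -(mulmxA x Jt M).
  by rewrite -(mulmxA x (Jt *m M) Jt^T) JtMJt mulmxN mulNmx e00N.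
have gtX : gf (g (f q)) (df f q a *m J (f q)) (df f q b) = (a *m Jt *m M *m b^T) 0 0.
  by rewrite HJt gfdf.
have isNB : forall X Y : 'rV[R]_((n.*2).+2), X *m g (f q) *m D^T = 0 ->
    Y *m g (f q) *m D^T = 0 -> (X - Y) *m g (f q) *m D^T = 0.
  by move=> X Y HX HY; rewrite !mulmxBl HX HY subrr.
have isNZ : forall k (X : 'rV[R]_((n.*2).+2)), X *m g (f q) *m D^T = 0 ->
    (k *: X) *m g (f q) *m D^T = 0.
  by move=> k X HX; rewrite -!scalemxAl HX scaler0.
set gab := gf (g (f q)) (df f q a) (df f q b).
set gt := gf (g (f q)) (df f q a *m J (f q)) (df f q b).
have gabE : gab = (a *m M *m b^T) 0 0 by rewrite /gab gfdf.
have gtE : gt = (a *m Jt *m M *m b^T) 0 0 by rewrite /gt HJt gfdf.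
apply: subr0_eq; apply: L5.
- apply: (isNB); first exact: sffN.
  by apply: (isNB); apply: (isNZ); [exact: HN | exact: isNJ _ HN].
- rewrite (gfBl _ (sff g f q a b)) (gfBl _ (gab *: H)) (gfZl _ gab H) (gfZl _ gt (H *m J (f q))).
  rewrite alpha gfJ beta sseta Amx -gabE -gtE; ring.
- rewrite (gfBl _ (sff g f q a b)) (gfBl _ (gab *: H)) (gfZl _ gab H) (gfZl _ gt (H *m J (f q))).
  rewrite KL gfJJ alpha beta sseta Amx E1 E2 -gabE -gtE; ring.
Qed.
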